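(* Let $n\ge1$, let $\mathfrak{n}=\mathfrak{n}(n)$, $\operatorname{Der}(\mathfrak{n})_1$, $B$ and $\mathfrak{B}(B)$ be as in the context, and let $D\in\operatorname{Der}(\mathfrak{n})_1$. For $v\in\mathfrak{B}(B)$ let $\lambda_v$ denote the diagonal coefficient of the matrix of $D$ in the basis $\mathfrak{B}(B)$ corresponding to $v$ (i.e. the $v$-coordinate of $D(v)$). Then: (a) $\lambda_{e'_i}=0$ for $1\le i\le n$; (b) $\lambda_a=\lambda_b=\lambda_x$; (c) $\lambda_h=\lambda_f=3\lambda_a$; (d) $\lambda_y=\lambda_u=\lambda_c=2\lambda_a$.
   Context: Fix a field of characteristic zero and a positive integer $n$. The Lie algebra $\mathfrak{n}(n)$ has basis $e_1,\dots,e_n,a,b,x$; $u,y$; $e_i\wedge e_j$ ($1\le i<j\le n$); $c$; $x_1,\dots,x_n$; $u_1,\dots,u_n$; $y_1,\dots,y_n$; $f,h$. Its bracket is defined on basis elements by: $[e_i,e_j]=e_i\wedge e_j$ for $i<j$ (so $[e_j,e_i]=-e_i\wedge e_j$), $[e_i,x]=x_i$, $[e_i,u]=u_i$, $[e_i,y]=y_i$, $[a,b]=c$, $[a,y]=f$, $[a,c]=h$, $[b,u]=h$, $[b,y]=h$, $[x,u]=f$, $[x,y]=h$, extended by antisymmetry, and all other brackets of pairs of basis elements are zero. Let $E=\operatorname{span}\{e_1,\dots,e_n\}$ and let $W$ be the span of all the other basis vectors. Let $\operatorname{Der}(\mathfrak{n})_1$ be the set of derivations $D$ of $\mathfrak{n}$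 with $D(E)\subset W$. For a basis $B=\{e'_1,\dots,e'_n\}$ of $E$, put $x'_i=[e'_i,x]$, $u'_i=[e'_i,u]$, $y'_i=[e'_i,y]$, $e'_i\wedge e'_j=[e'_i,e'_j]$, and let $\mathfrak{B}(B)$ be the ordered basis $e'_1,\dots,e'_n,a,b,x,u,y,(e'_i\wedge e'_j)_{1\le i<j\le n}$ (lexicographic order), $c,x'_1,\dots,x'_n,u'_1,\dots,u'_n,y'_1,\dots,y'_n,f,h$. *)

(* Defs.v *)
From mathcomp Require Import all_boot all_algebra.
Set Implicit Arguments. Unset Strict Implicit. Unset Printing Implicit Defensive.
Import GRing.Theory.
Local Open Scope ring_scope.

(* pairs i < j indexing e_i /\ e_j *)
Definition wpair (n : nat) := {p : 'I_n * 'I_n | (p.1 < p.2)%N}.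

(* lbl n = e_i (i : 'I_n)
         + the 8 single vectors a,b,x,u,y,c,f,h (as 'I_8, in this order)
         + e_i/\e_j (i<j)
         + x_i,u_i,y_i (as ('I_3 * 'I_n), t = 0,1,2 for x,u,y) *)
Definition lbl (n : nat) : finType :=
  ('I_n + 'I_8 + wpair n + 'I_3 * 'I_n)%type.

Definition lE {n} (i : 'I_n) : lbl n := inl (inl (inl i)).
Definition lS {n} (k : nat) : lbl n := inl (inl (inr (inord k))).
Definition la {n} : lbl n := lS 0.
Definition lb {n} : lbl n := lS 1.
Definition lx {n} : lbl n := lS 2.
Definition lu {n} : lbl n := lS 3.
Definition ly {n} : lbl n := lS 4.
Definition lc {n} : lbl n := lS 5.
Definition lf {n} : lbl n := lS 6.
Definition lh {n} : lbl n := lS 7.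
Definition lW {n} (w : wpair n) : lbl n := inl (inr w).
Definition lT {n} (t : nat) (i : 'I_n) : lbl n := inr (inord t, i).

Definition nalg (F : fieldType) (n : nat) := {ffun lbl n -> F^o}.

Definition bv {F : fieldType} {n} (l : lbl n) : nalg F n :=
  [ffun k => (k == l)%:R].

(* table of the defining brackets [p,q] = r (all coefficients are 1) *)
Definition btab {n} (p q : lbl n) : option (lbl n) :=
  match p, q with
  | inl (inl (inl i)), inl (inl (inl j)) => omap lW (insub (i, j) : option (wpair n))
  | inl (inl (inl i)), inl (inl (inr k)) =>
      if val k == 2%N then Some (lT 0 i)
      else if val k == 3%N then Some (lT 1 i)
      else if val k == 4%N then Some (lT 2 i) else None
  | inl (inl (inr k)), inl (inl (inr l)) =>
      match val k, val l with
      | 0, 1 => Some lc   (* [a,b] = c *)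
      | 0, 4 => Some lf   (* [a,y] = f *)
      | 0, 5 => Some lh   (* [a,c] = h *)
      | 1, 3 => Some lh   (* [b,u] = h *)
      | 1, 4 => Some lh   (* [b,y] = h *)
      | 2, 3 => Some lf   (* [x,u] = f *)
      | 2, 4 => Some lh   (* [x,y] = h *)
      | _, _ => None
      end%N
  | _, _ => None
  end.

Definition bbr {F : fieldType} {n} (p q : lbl n) : nalg F n :=
  match btab p q with
  | Some r => bv r
  | None => match btab q p with Some r => - bv r | None => 0 end
  end.

Definition lie {F : fieldType} {n} (v w : nalg F n) : nalg F n :=
  \sum_p \sum_q (v p * w q) *: bbr p q.

Definition is_derivation {F : fieldType} {n} (D : {linear nalg F n -> nalg F n}) :=
  forall v w, D (lie v w) = lie (D v) w + lie v (D w).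

Definition is_e {n} (l : lbl n) : bool :=
  match l with inl (inl (inl _)) => true | _ => false end.

Definition inE {F : fieldType} {n} (v : nalg F n) := forall l, ~~ is_e l -> v l = 0.
Definition inW {F : fieldType} {n} (v : nalg F n) := forall l, is_e l -> v l = 0.

Definition Der1 {F : fieldType} {n} (D : {linear nalg F n -> nalg F n}) :=
  is_derivation D /\ forall v, inE v -> inW (D v).

Definition basis_of_E {F : fieldType} {n} (B : 'I_n -> nalg F n) :=
  [/\ forall i, inE (B i),
      forall c : 'I_n -> F, \sum_i c i *: B i = 0 -> forall i, c i = 0
    & forall v, inE v -> exists c : 'I_n -> F, v = \sum_i c i *: B i].

Definition frakB {F : fieldType} {n} (B : 'I_n -> nalg F n) (l : lbl n) : nalg F n :=
  match l with
  | inl (inl (inl i)) => B i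
  | inl (inl (inr k)) => bv (inl (inl (inr k)))
  | inl (inr w) => lie (B (val w).1) (B (val w).2)
  | inr (t, i) => lie (B i) (bv (lS (val t + 2)))
  end.

(* Main.v *)
Require Import Defs.
From mathcomp Require Import all_boot all_algebra ring.
Import GRing.Theory.
Local Open Scope ring_scope.
Set Implicit Arguments. Unset Strict Implicit.
Lemma alg (F : fieldType) (vaa vax vba vbb vbx vcc vcu vcy vff vhf vhh vuu vuy vxa vxb vxx vyu vyy : F) (Z0 : (vcc - (vaa * 1 + vbb * 1)) = 0) (Z1 : (0 - (0 + vxb * 1)) = 0) (Z2 : (0 - (vax * 1 + vuy * 1)) = 0) (Z3 : (vff - (vaa * 1 + vyy * 1)) = 0) (Z4 : (vhh - (vaa * 1 + vcc * 1)) = 0) (Z5 : (vhh - (vbb * 1 + (vuu * 1 + vuy * 1))) = 0) (Z6 : (vhf - (vba * 1 + 0)) = 0) (Z7 : (vhh - ((vbb * 1 + vbx * 1) + (vyu * 1 + vyy * 1))) = 0) (Z8 : (0 - (vba * 1 + (vcu * 1 + vcy * 1))) = 0) (Z9 : (vhf - (vxa * 1 + vyu * 1)) = 0) (Z10 : (vhh - ((vxb * 1 + vxx * 1) + vyy * 1)) = 0) (Z11 : (- vff - (vuu * (-1) + vxx * (-1))) = 0) (Z12 : (0 - (vcy * (-1) + vxa * (-1))) = 0) (Z13 : vax = 0) (Z14 : vbx = 0) (Z15 : vcu = 0) :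
  (vaa = vbb /\ vbb = vxx) /\ (vhh = vff /\ vff = 3 * vaa) /\ (vyy = vuu /\ vuu = vcc /\ vcc = 2 * vaa).
Proof.
have T_0 : vaa = vbb.
  apply/eqP; rewrite -subr_eq0; apply/eqP.
  transitivity ((1) * (0 - (0 + vxb * 1)) + (1) * (0 - (vax * 1 + vuy * 1)) + (-1) * (vff - (vaa * 1 + vyy * 1)) + (-1) * (vhh - (vbb * 1 + (vuu * 1 + vuy * 1))) + (2) * (vhf - (vba * 1 + 0)) + (2) * (vhh - ((vbb * 1 + vbx * 1) + (vyu * 1 + vyy * 1))) + (-2) * (0 - (vba * 1 + (vcu * 1 + vcy * 1))) + (-2) * (vhf - (vxa * 1 + vyu * 1)) + (-1) * (vhh - ((vxb * 1 + vxx * 1) + vyy * 1)) + (-1) * (- vff - (vuu * (-1) + vxx * (-1))) + (-2) * (0 - (vcy * (-1) + vxa * (-1))) + (1) * vax + (2) * vbx + (-2) * vcu); first by ring.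
  by rewrite ?Z0 ?Z1 ?Z2 ?Z3 ?Z4 ?Z5 ?Z6 ?Z7 ?Z8 ?Z9 ?Z10 ?Z11 ?Z12 ?Z13 ?Z14 ?Z15; ring.
have T_1 : vbb = vxx.
  apply/eqP; rewrite -subr_eq0; apply/eqP.
  transitivity ((-1) * (0 - (0 + vxb * 1)) + (-1) * (vhf - (vba * 1 + 0)) + (-1) * (vhh - ((vbb * 1 + vbx * 1) + (vyu * 1 + vyy * 1))) + (1) * (0 - (vba * 1 + (vcu * 1 + vcy * 1))) + (1) * (vhf - (vxa * 1 + vyu * 1)) + (1) * (vhh - ((vxb * 1 + vxx * 1) + vyy * 1)) + (1) * (0 - (vcy * (-1) + vxa * (-1))) + (-1) * vbx + (1) * vcu); first by ring.
  by rewrite ?Z0 ?Z1 ?Z2 ?Z3 ?Z4 ?Z5 ?Z6 ?Z7 ?Z8 ?Z9 ?Z10 ?Z11 ?Z12 ?Z13 ?Z14 ?Z15; ring.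
have T_2 : vhh = vff.
  apply/eqP; rewrite -subr_eq0; apply/eqP.
  transitivity ((-1) * (0 - (0 + vxb * 1)) + (-1) * (0 - (vax * 1 + vuy * 1)) + (1) * (vhh - (vbb * 1 + (vuu * 1 + vuy * 1))) + (-1) * (vhf - (vba * 1 + 0)) + (-1) * (vhh - ((vbb * 1 + vbx * 1) + (vyu * 1 + vyy * 1))) + (1) * (0 - (vba * 1 + (vcu * 1 + vcy * 1))) + (1) * (vhf - (vxa * 1 + vyu * 1)) + (1) * (vhh - ((vxb * 1 + vxx * 1) + vyy * 1)) + (1) * (- vff - (vuu * (-1) + vxx * (-1))) + (1) * (0 - (vcy * (-1) + vxa * (-1))) + (-1) * vax + (-1) * vbx + (1) * vcu); first by ring.
  by rewrite ?Z0 ?Z1 ?Z2 ?Z3 ?Z4 ?Z5 ?Z6 ?Z7 ?Z8 ?Z9 ?Z10 ?Z11 ?Z12 ?Z13 ?Z14 ?Z15; ring.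
have T_3 : vff = 3 * vaa.
  apply/eqP; rewrite -subr_eq0; apply/eqP.
  transitivity ((1) * (vcc - (vaa * 1 + vbb * 1)) + (1) * (vff - (vaa * 1 + vyy * 1)) + (1) * (vhh - (vaa * 1 + vcc * 1)) + (-1) * (vhf - (vba * 1 + 0)) + (-1) * (vhh - ((vbb * 1 + vbx * 1) + (vyu * 1 + vyy * 1))) + (1) * (0 - (vba * 1 + (vcu * 1 + vcy * 1))) + (1) * (vhf - (vxa * 1 + vyu * 1)) + (1) * (0 - (vcy * (-1) + vxa * (-1))) + (-1) * vbx + (1) * vcu); first by ring.
  by rewrite ?Z0 ?Z1 ?Z2 ?Z3 ?Z4 ?Z5 ?Z6 ?Z7 ?Z8 ?Z9 ?Z10 ?Z11 ?Z12 ?Z13 ?Z14 ?Z15; ring.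
have T_4 : vyy = vuu.
  apply/eqP; rewrite -subr_eq0; apply/eqP.
  transitivity ((-1) * (0 - (vax * 1 + vuy * 1)) + (1) * (vhh - (vbb * 1 + (vuu * 1 + vuy * 1))) + (-1) * (vhf - (vba * 1 + 0)) + (-1) * (vhh - ((vbb * 1 + vbx * 1) + (vyu * 1 + vyy * 1))) + (1) * (0 - (vba * 1 + (vcu * 1 + vcy * 1))) + (1) * (vhf - (vxa * 1 + vyu * 1)) + (1) * (0 - (vcy * (-1) + vxa * (-1))) + (-1) * vax + (-1) * vbx + (1) * vcu); first by ring.
  by rewrite ?Z0 ?Z1 ?Z2 ?Z3 ?Z4 ?Z5 ?Z6 ?Z7 ?Z8 ?Z9 ?Z10 ?Z11 ?Z12 ?Z13 ?Z14 ?Z15; ring.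
have T_5 : vuu = vcc.
  apply/eqP; rewrite -subr_eq0; apply/eqP.
  transitivity ((1) * (0 - (0 + vxb * 1)) + (2) * (0 - (vax * 1 + vuy * 1)) + (-1) * (vff - (vaa * 1 + vyy * 1)) + (1) * (vhh - (vaa * 1 + vcc * 1)) + (-2) * (vhh - (vbb * 1 + (vuu * 1 + vuy * 1))) + (2) * (vhf - (vba * 1 + 0)) + (2) * (vhh - ((vbb * 1 + vbx * 1) + (vyu * 1 + vyy * 1))) + (-2) * (0 - (vba * 1 + (vcu * 1 + vcy * 1))) + (-2) * (vhf - (vxa * 1 + vyu * 1)) + (-1) * (vhh - ((vxb * 1 + vxx * 1) + vyy * 1)) + (-1) * (- vff - (vuu * (-1) + vxx * (-1))) + (-2) * (0 - (vcy * (-1) + vxa * (-1))) + (2) * vax + (2) * vbx + (-2) * vcu); first by ring.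
  by rewrite ?Z0 ?Z1 ?Z2 ?Z3 ?Z4 ?Z5 ?Z6 ?Z7 ?Z8 ?Z9 ?Z10 ?Z11 ?Z12 ?Z13 ?Z14 ?Z15; ring.
have T_6 : vcc = 2 * vaa.
  apply/eqP; rewrite -subr_eq0; apply/eqP.
  transitivity ((1) * (vcc - (vaa * 1 + vbb * 1)) + (-1) * (0 - (0 + vxb * 1)) + (-1) * (0 - (vax * 1 + vuy * 1)) + (1) * (vff - (vaa * 1 + vyy * 1)) + (1) * (vhh - (vbb * 1 + (vuu * 1 + vuy * 1))) + (-2) * (vhf - (vba * 1 + 0)) + (-2) * (vhh - ((vbb * 1 + vbx * 1) + (vyu * 1 + vyy * 1))) + (2) * (0 - (vba * 1 + (vcu * 1 + vcy * 1))) + (2) * (vhf - (vxa * 1 + vyu * 1)) + (1) * (vhh - ((vxb * 1 + vxx * 1) + vyy * 1)) + (1) * (- vff - (vuu * (-1) + vxx * (-1))) + (2) * (0 - (vcy * (-1) + vxa * (-1))) + (-1) * vax + (-2) * vbx + (2) * vcu); first by ring.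
  by rewrite ?Z0 ?Z1 ?Z2 ?Z3 ?Z4 ?Z5 ?Z6 ?Z7 ?Z8 ?Z9 ?Z10 ?Z11 ?Z12 ?Z13 ?Z14 ?Z15; ring.
by do !split.
Qed.

Section T.
Variable F : fieldType. Variable n : nat.
Implicit Types p q r : lbl n.

Lemma coordZ (c : F) (v : nalg F n) r : (c *: v) r = c * v r.
Proof. by rewrite !ffunE. Qed.

Lemma lie_bvr (v : nalg F n) q : lie v (bv q) = \sum_p v p *: bbr p q.
Proof.
rewrite /lie; apply: eq_bigr => p _; rewrite (bigD1 q) //= big1 ?addr0.
  by rewrite /bv ffunE eqxx mulr1.
by move=> q' hq'; rewrite /bv ffunE (negbTE hq') mulr0 scale0r.
Qed.

Lemma lie_bvl (w : nalg F n) p : lie (bv p) w = \sum_q w q *: bbr p q.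
Proof.
rewrite /lie (bigD1 p) //= [X in _ + X]big1 ?addr0.
  by apply: eq_bigr => q _; rewrite /bv ffunE eqxx mul1r.
move=> p' hp'; apply: big1 => q _.
by rewrite /bv ffunE (negbTE hp') mul0r scale0r.
Qed.

Lemma lie_bv p q : lie (bv p) (bv q) = @bbr F n p q.
Proof.
rewrite lie_bvl (bigD1 q) //= big1 ?addr0.
  by rewrite /bv ffunE eqxx scale1r.
by move=> q' hq'; rewrite /bv ffunE (negbTE hq') scale0r.
Qed.

Variable D : {linear nalg F n -> nalg F n}.
Hypothesis HD : is_derivation D.
Definition d p r := D (bv p) r.

Lemma rel p q r : (D (bbr p q)) r =
  \sum_w d p w * bbr w q r + \sum_w d q w * bbr p w r.
Proof.
rewrite -lie_bv HD ffunE lie_bvr lie_bvl !sum_ffunE.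
by congr (_ + _); apply: eq_bigr => w _; rewrite coordZ.
Qed.
Definition is_sing (l : lbl n) := match l with inl (inl (inr _)) => true | _ => false end.

Lemma btab_sing p q r : btab p q = Some r -> is_sing r -> is_sing p && is_sing q.
Proof.
case: p => [[[i|k]|w]|[t i]]; case: q => [[[j|l]|w']|[t' j]] //=.
  by case: insub => //= ? [<-].
by do ![case: ifP => _] => // -[<-].
Qed.

Lemma bbr_ns p q r : is_sing r -> ~~ (is_sing p && is_sing q) -> @bbr F n p q r = 0.
Proof.
move=> hr hpq; rewrite /bbr; case E1: (btab p q) => [r1|].
  rewrite /bv ffunE; case: eqP => // e; subst r1.
  by move: (btab_sing E1 hr); rewrite (negbTE hpq).
case E2: (btab q p) => [r2|]; last by rewrite ffunE.
rewrite ffunE /bv ffunE; case: eqP => [e|]; last by rewrite oppr0.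
subst r2; by move: (btab_sing E2 hr); rewrite andbC (negbTE hpq).
Qed.

Lemma sing_cases (P : lbl n -> Prop) :
  (forall w, ~~ is_sing w -> P w) -> P la -> P lb -> P lx -> P lu -> P ly ->
  P lc -> P lf -> P lh -> forall w, P w.
Proof.
move=> Hns Ha Hb Hx Hu Hy Hc Hf Hh [[[i|k]|w]|[t i]]; try by apply: Hns.
rewrite -(inord_val k); case: k => m /= hm.
case: m hm => [|m] hm; first exact: Ha.
case: m hm => [|m] hm; first exact: Hb.
case: m hm => [|m] hm; first exact: Hx.
case: m hm => [|m] hm; first exact: Hu.
case: m hm => [|m] hm; first exact: Hy.
case: m hm => [|m] hm; first exact: Hc.
case: m hm => [|m] hm; first exact: Hf.
case: m hm => [|m] hm; first exact: Hh.
by [].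
Qed.

Lemma eq_lS i j : (i < 8)%N -> (j < 8)%N -> (@lS n i == lS j) = (i == j).
Proof.
move=> hi hj; rewrite /lS; apply/eqP/eqP => [[] /(congr1 val)|->] //=.
by rewrite !inordK.
Qed.

Lemma sum1 (f g : lbl n -> F) w1 : (forall w, w != w1 -> g w = 0) ->
  \sum_w f w * g w = f w1 * g w1.
Proof.
move=> H; rewrite (bigD1 w1) //= big1 ?addr0 // => w hw; by rewrite H ?mulr0.
Qed.

Lemma sum2 (f g : lbl n -> F) w1 w2 : w1 != w2 -> (forall w, w != w1 -> w != w2 -> g w = 0) ->
  \sum_w f w * g w = f w1 * g w1 + f w2 * g w2.
Proof.
move=> h12 H; rewrite (bigD1 w1) //= (bigD1 w2) 1?eq_sym //= big1 ?addr0 ?addrA // => w /andP[hw2 hw1].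
by rewrite H ?mulr0.
Qed.

Ltac cmp := rewrite /bbr /btab /= ?inordK // /bv ?ffunE /la /lb /lx /lu /ly /lc /lf /lh ?eq_lS //= ?oppr0.
Lemma bbr_nsl p q r : ~~ is_sing p -> is_sing r -> @bbr F n p q r = 0.
Proof. by move=> hp hr; apply: bbr_ns; rewrite // (negbTE hp). Qed.
Lemma bbr_nsr p q r : ~~ is_sing q -> is_sing r -> @bbr F n p q r = 0.
Proof. by move=> hp hr; apply: bbr_ns; rewrite // (negbTE hp) andbF. Qed.
Ltac side := apply: sing_cases; [move=> w ? *; first [by apply: bbr_nsl | by apply: bbr_nsr] |..]; cmp; try by [].


Lemma all_cases (P : lbl n -> Prop) :
  (forall j, P (lE j)) -> P la -> P lb -> P lx -> P lu -> P ly ->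
  P lc -> P lf -> P lh -> (forall w, P (lW w)) -> (forall t j, P (inr (t, j))) -> forall w, P w.
Proof.
move=> He Ha Hb Hx Hu Hy Hc Hf Hh HW HT [[[i|k]|w]|[t i]]; try by [apply: He|apply: HW|apply: HT].
rewrite -(inord_val k); case: k => m /= hm.
case: m hm => [|m] hm; first exact: Ha.
case: m hm => [|m] hm; first exact: Hb.
case: m hm => [|m] hm; first exact: Hx.
case: m hm => [|m] hm; first exact: Hu.
case: m hm => [|m] hm; first exact: Hy.
case: m hm => [|m] hm; first exact: Hc.
case: m hm => [|m] hm; first exact: Hf.
case: m hm => [|m] hm; first exact: Hh.
by [].
Qed.

Lemma eq_inord3 a b : (a < 3)%N -> (b < 3)%N -> ((inord a : 'I_3) == inord b) = (a == b).
Proof.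
move=> ha hb; apply/eqP/eqP => [/(congr1 val)|->] //=.
by rewrite !inordK.
Qed.

Lemma eq_lT3 a b (i j : 'I_n) : (a < 3)%N -> (b < 3)%N ->
  ((inr (inord a, i) : lbl n) == inr (inord b, j)) = (a == b) && (i == j).
Proof.
move=> ha hb; apply/eqP/andP => [[/(congr1 val) /= e ->]|[/eqP -> /eqP ->]] //.
by split=> //; move: e; rewrite !inordK // => ->.
Qed.

Ltac cmpT := rewrite /bbr /btab /= ?inordK // /bv ?ffunE /la /lb /lx /lu /ly /lc /lf /lh /lT ?eq_lS //= ?eq_inord3 ?eq_lT3 //= ?eqxx /= ?oppr0 //.
Ltac ecases := apply: all_cases => [j|||||||||w|t j]; rewrite /bbr /btab /= ?inordK //=; try (do 2?[case: insub => [?|] /=]); rewrite /bv ?ffunE /la /lb /lx /lu /ly /lc /lf /lh /lT ?eq_lS //= ?eq_inord3 ?eq_lT3 //= ?eqxx /= ?oppr0; try by [].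


Lemma sum1' (f g : lbl n -> F) w1 c : (forall w, w != w1 -> g w = 0) -> g w1 = c ->
  \sum_w f w * g w = f w1 * c.
Proof. by move=> H <-; apply: sum1. Qed.
Lemma sum2' (f g : lbl n -> F) w1 w2 c1 c2 : w1 != w2 -> (forall w, w != w1 -> w != w2 -> g w = 0) ->
  g w1 = c1 -> g w2 = c2 -> \sum_w f w * g w = f w1 * c1 + f w2 * c2.
Proof. by move=> h H <- <-; apply: sum2. Qed.
Lemma sum0 (f g : lbl n -> F) : (forall w, g w = 0) -> \sum_w f w * g w = 0.
Proof. by move=> H; apply: big1 => w _; rewrite H mulr0. Qed.

Lemma eqE (i : 'I_n) s t (hs : @bbr F n (lE i) s = 0) (hz : forall w, @bbr F n w s (lT t i) = 0)
  (hx : forall w, w != lS (t + 2) -> @bbr F n (lE i) w (lT t i) = 0)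
  (h1 : @bbr F n (lE i) (lS (t + 2)) (lT t i) = 1) : d s (lS (t + 2)) = 0.
Proof.
have := rel (lE i) s (lT t i); rewrite hs linear0 ffunE sum0 // (sum1' _ hx h1).
by rewrite add0r mulr1 => <-.
Qed.

Lemma main_d (i : 'I_n) :
  (d la la = d lb lb /\ d lb lb = d lx lx) /\ (d lh lh = d lf lf /\ d lf lf = 3 * d la la) /\
      (d ly ly = d lu lu /\ d lu lu = d lc lc /\ d lc lc = 2 * d la la).
Proof.
have E0 : d lc lc = d la la * 1 + d lb lb * 1.
  transitivity (D (bbr la lb) lc).
    by rewrite /d (_ : bbr la lb = bv lc) ?linearN ?linear0 ?ffunE //; cmp.
  rewrite rel; congr (_ + _).
    apply: sum1'; [side|cmp].
  apply: sum1'; [side|cmp].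
have E1 : 0 = 0 + d lx lb * 1.
  transitivity (D (bbr la lx) lc).
    by rewrite /d (_ : bbr la lx = 0) ?linearN ?linear0 ?ffunE //; cmp.
  rewrite rel; congr (_ + _).
    apply: sum0; side.
  apply: sum1'; [side|cmp].
have E2 : 0 = d la lx * 1 + d lu ly * 1.
  transitivity (D (bbr la lu) lf).
    by rewrite /d (_ : bbr la lu = 0) ?linearN ?linear0 ?ffunE //; cmp.
  rewrite rel; congr (_ + _).
    apply: sum1'; [side|cmp].
  apply: sum1'; [side|cmp].
have E3 : d lf lf = d la la * 1 + d ly ly * 1.
  transitivity (D (bbr la ly) lf).
    by rewrite /d (_ : bbr la ly = bv lf) ?linearN ?linear0 ?ffunE //; cmp.
  rewrite rel; congr (_ + _).
    apply: sum1'; [side|cmp].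
  apply: sum1'; [side|cmp].
have E4 : d lh lh = d la la * 1 + d lc lc * 1.
  transitivity (D (bbr la lc) lh).
    by rewrite /d (_ : bbr la lc = bv lh) ?linearN ?linear0 ?ffunE //; cmp.
  rewrite rel; congr (_ + _).
    apply: sum1'; [side|cmp].
  apply: sum1'; [side|cmp].
have E5 : d lh lh = d lb lb * 1 + (d lu lu * 1 + d lu ly * 1).
  transitivity (D (bbr lb lu) lh).
    by rewrite /d (_ : bbr lb lu = bv lh) ?linearN ?linear0 ?ffunE //; cmp.
  rewrite rel; congr (_ + _).
    apply: sum1'; [side|cmp].
  apply: sum2'; [cmp|side|cmp|cmp].
have E6 : d lh lf = d lb la * 1 + 0.
  transitivity (D (bbr lb ly) lf).
    by rewrite /d (_ : bbr lb ly = bv lh) ?linearN ?linear0 ?ffunE //; cmp.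
  rewrite rel; congr (_ + _).
    apply: sum1'; [side|cmp].
  apply: sum0; side.
have E7 : d lh lh = (d lb lb * 1 + d lb lx * 1) + (d ly lu * 1 + d ly ly * 1).
  transitivity (D (bbr lb ly) lh).
    by rewrite /d (_ : bbr lb ly = bv lh) ?linearN ?linear0 ?ffunE //; cmp.
  rewrite rel; congr (_ + _).
    apply: sum2'; [cmp|side|cmp|cmp].
  apply: sum2'; [cmp|side|cmp|cmp].
have E8 : 0 = d lb la * 1 + (d lc lu * 1 + d lc ly * 1).
  transitivity (D (bbr lb lc) lh).
    by rewrite /d (_ : bbr lb lc = 0) ?linearN ?linear0 ?ffunE //; cmp.
  rewrite rel; congr (_ + _).
    apply: sum1'; [side|cmp].
  apply: sum2'; [cmp|side|cmp|cmp].
have E9 : d lh lf = d lx la * 1 + d ly lu * 1.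
  transitivity (D (bbr lx ly) lf).
    by rewrite /d (_ : bbr lx ly = bv lh) ?linearN ?linear0 ?ffunE //; cmp.
  rewrite rel; congr (_ + _).
    apply: sum1'; [side|cmp].
  apply: sum1'; [side|cmp].
have E10 : d lh lh = (d lx lb * 1 + d lx lx * 1) + d ly ly * 1.
  transitivity (D (bbr lx ly) lh).
    by rewrite /d (_ : bbr lx ly = bv lh) ?linearN ?linear0 ?ffunE //; cmp.
  rewrite rel; congr (_ + _).
    apply: sum2'; [cmp|side|cmp|cmp].
  apply: sum1'; [side|cmp].
have E11 : - d lf lf = d lu lu * (-1) + d lx lx * (-1).
  transitivity (D (bbr lu lx) lf).
    by rewrite /d (_ : bbr lu lx = - bv lf) ?linearN ?linear0 ?ffunE //; cmp.
  rewrite rel; congr (_ + _).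
    apply: sum1'; [side|cmp].
  apply: sum1'; [side|cmp].
have E12 : 0 = d lc ly * (-1) + d lx la * (-1).
  transitivity (D (bbr lc lx) lh).
    by rewrite /d (_ : bbr lc lx = 0) ?linearN ?linear0 ?ffunE //; cmp.
  rewrite rel; congr (_ + _).
    apply: sum1'; [side|cmp].
  apply: sum1'; [side|cmp].

have E13 : d la lx = 0.
  by apply: (@eqE i la 0); [cmpT|ecases|ecases|cmpT].
have E14 : d lb lx = 0.
  by apply: (@eqE i lb 0); [cmpT|ecases|ecases|cmpT].
have E15 : d lc lu = 0.
  by apply: (@eqE i lc 1); [cmpT|ecases|ecases|cmpT].
have Z0 : (d lc lc - (d la la * 1 + d lb lb * 1)) = 0 by rewrite -?E0 ?subrr.
have Z1 : (0 - (0 + d lx lb * 1)) = 0 by rewrite -?E1 ?subrr.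
have Z2 : (0 - (d la lx * 1 + d lu ly * 1)) = 0 by rewrite -?E2 ?subrr.
have Z3 : (d lf lf - (d la la * 1 + d ly ly * 1)) = 0 by rewrite -?E3 ?subrr.
have Z4 : (d lh lh - (d la la * 1 + d lc lc * 1)) = 0 by rewrite -?E4 ?subrr.
have Z5 : (d lh lh - (d lb lb * 1 + (d lu lu * 1 + d lu ly * 1))) = 0 by rewrite -?E5 ?subrr.
have Z6 : (d lh lf - (d lb la * 1 + 0)) = 0 by rewrite -?E6 ?subrr.
have Z7 : (d lh lh - ((d lb lb * 1 + d lb lx * 1) + (d ly lu * 1 + d ly ly * 1))) = 0 by rewrite -?E7 ?subrr.
have Z8 : (0 - (d lb la * 1 + (d lc lu * 1 + d lc ly * 1))) = 0 by rewrite -?E8 ?subrr.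
have Z9 : (d lh lf - (d lx la * 1 + d ly lu * 1)) = 0 by rewrite -?E9 ?subrr.
have Z10 : (d lh lh - ((d lx lb * 1 + d lx lx * 1) + d ly ly * 1)) = 0 by rewrite -?E10 ?subrr.
have Z11 : (- d lf lf - (d lu lu * (-1) + d lx lx * (-1))) = 0 by rewrite -?E11 ?subrr.
have Z12 : (0 - (d lc ly * (-1) + d lx la * (-1))) = 0 by rewrite -?E12 ?subrr.
have Z13 : d la lx = 0 by [].
have Z14 : d lb lx = 0 by [].
have Z15 : d lc lu = 0 by [].
exact: (alg Z0 Z1 Z2 Z3 Z4 Z5 Z6 Z7 Z8 Z9 Z10 Z11 Z12 Z13 Z14 Z15).
Qed.
End T.
Set Implicit Arguments. Unset Strict Implicit.
Section U.
Variable F : fieldType. Variable n : nat.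
Implicit Types p q r : lbl n.

Lemma btab_e p q r : btab p q = Some r -> ~~ is_e r.
Proof.
move=> E; apply/negP => he; move: E; case: r he => [[[x|?]|?]|?] // _.
case: p => [[[i|k]|w]|[t i]]; case: q => [[[j|l]|w']|[t' j]] //=.
- by case: insub.
- by do ![case: ifP => _].
move: (nat_of_ord k) (nat_of_ord l) => a b.
by do 8?[case: a => [|a]] => //; do 8?[case: b => [|b]].
Qed.

Lemma bbr_e p q r : is_e r -> @bbr F n p q r = 0.
Proof.
move=> hr; rewrite /bbr; case E1: (btab p q) => [r1|].
  rewrite /bv ffunE; case: eqP => // e; subst r1.
  by move: (btab_e E1); rewrite hr.
case E2: (btab q p) => [r2|]; last by rewrite ffunE.
rewrite ffunE /bv ffunE; case: eqP => [e|]; last by rewrite oppr0.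
by subst r2; move: (btab_e E2); rewrite hr.
Qed.

Lemma lie_e (v w : nalg F n) r : is_e r -> lie v w r = 0.
Proof.
move=> hr; rewrite /lie sum_ffunE big1 // => p _; rewrite sum_ffunE big1 // => q _.
by rewrite coordZ bbr_e ?mulr0.
Qed.

Lemma lie_sing (v w : nalg F n) r : Defs.inE v -> is_sing r -> lie v w r = 0.
Proof.
move=> hv hr; rewrite /lie sum_ffunE big1 // => p _; rewrite sum_ffunE big1 // => q _.
rewrite coordZ; case: (boolP (is_e p)) => hp.
  rewrite bbr_nsl ?mulr0 //; by case: p hp => [[[?|?]|?]|?].
by rewrite hv // !mul0r.
Qed.

Lemma frakB_sing (B : 'I_n -> nalg F n) (HBE : forall i, Defs.inE (B i)) k s :
  is_sing s -> frakB B k s = (s == k)%:R.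
Proof.
case: s => [[[?|s]|?]|?] // _; case: k => [[[i|k]|w]|[t i]] /=.
- by rewrite HBE.
- by rewrite /bv ffunE.
- by rewrite lie_sing.
- by rewrite lie_sing.
Qed.

Lemma frakB_e (B : 'I_n -> nalg F n) k s :
  is_e s -> ~~ is_e k -> frakB B k s = 0.
Proof.
case: s => [[[s|?]|?]|?] // _; case: k => [[[i|k]|w]|[t i]] //= _.
- by rewrite /bv ffunE.
- by rewrite lie_e.
- by rewrite lie_e.
Qed.
End U.

Set Implicit Arguments. Unset Strict Implicit.

Lemma diagM (F : fieldType) n (D : {linear nalg F n -> nalg F n}) (B : 'I_n -> nalg F n)
  (HBE : forall i, Defs.inE (B i)) (M : lbl n -> lbl n -> F)
  (HM : forall l, D (frakB B l) = \sum_k M l k *: frakB B k) s :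
  is_sing s -> M s s = D (bv s) s.
Proof.
case: s => [[[?|k]|?]|?] // hs.
have := congr1 (fun v : nalg F n => v (inl (inl (inr k)))) (HM (inl (inl (inr k)))).
rewrite /= => ->; rewrite sum_ffunE.
rewrite (eq_bigr (fun l => M (inl (inl (inr k))) l * frakB B l (inl (inl (inr k))))); last first.
  by move=> l _; rewrite coordZ.
rewrite (@sum1 F n _ _ (inl (inl (inr k)))) ?frakB_sing ?eqxx ?mulr1 // => w hw.
by rewrite frakB_sing // eq_sym (negbTE hw).
Qed.

Lemma partA (F : fieldType) n (D : {linear nalg F n -> nalg F n}) (B : 'I_n -> nalg F n)
  (HB : basis_of_E B) (M : lbl n -> lbl n -> F)
  (HM : forall l, D (frakB B l) = \sum_k M l k *: frakB B k)
  (HDW : forall v, Defs.inE v -> inW (D v)) i : M (lE i) (lE i) = 0.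
Proof.
case: HB => HBE Hind _.
suff: forall m, M (lE i) (lE m) = 0 by apply.
apply: Hind; apply/ffunP => l; rewrite sum_ffunE ffunE.
case: (boolP (is_e l)) => hl; last first.
  by apply: big1 => m _; rewrite coordZ HBE ?mulr0.
have H := HDW _ (HBE i) l hl.
move: H; rewrite -[B i]/(frakB B (lE i)) HM sum_ffunE => H.
apply: (etrans _ H).
rewrite [RHS]big_sumType [X in _ = X + _]big_sumType [X in _ = X + _ + _]big_sumType /=.
rewrite [X in _ = _ + X]big1 ?[X in _ = _ + X + _]big1 ?[X in _ = _ + X + _ + _]big1 ?addr0 //.
all: try by move=> m _; rewrite coordZ; (try case: m => t j); rewrite ?lie_e ?mulr0 //; case: l hl => [[[?|?]|?]|?] //= _; rewrite /bv ffunE mulr0.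
move=> m _; rewrite coordZ /bv ffunE; clear H; case: l hl => [[[?|?]|?]|?] //= _.
by rewrite mulr0.
Qed.

Unset Implicit Arguments.

Theorem mainTheorem3 (F : fieldType) (n : nat)
  (charF : [pchar F] =i pred0) (n_ge1 : (0 < n)%N)
  (D : {linear nalg F n -> nalg F n}) (HD : Der1 D)
  (B : 'I_n -> nalg F n) (HB : basis_of_E B)
  (M : lbl n -> lbl n -> F)
  (HM : forall l, D (frakB B l) = \sum_k M l k *: frakB B k) :
  [/\ (forall i : 'I_n, M (lE i) (lE i) = 0),
      M la la = M lb lb /\ M lb lb = M lx lx,
      M lh lh = M lf lf /\ M lf lf = 3 * M la la
    & [/\ M ly ly = M lu lu, M lu lu = M lc lc & M lc lc = 2 * M la la]].
Proof.
case: HD => HD1 HDW.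
have HBE : forall i, Defs.inE (B i) by case: HB.
have [[Tab Tbx] [[Thf Tfa] [Tyu [Tuc Tca]]]] := main_d HD1 (Ordinal n_ge1).
rewrite /d in Tab Tbx Thf Tfa Tyu Tuc Tca.
rewrite !(diagM HBE HM) //.
split => //.
by move=> i; apply: (partA HB HM HDW).
Qed.
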